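(* Let $(a_n)_n=[a_{n\varepsilon}]_{\mathrm s}$, $(b_n)_n=[b_{n\varepsilon}]_{\mathrm s}\in\widetilde{\mathbb R}_{\mathrm s}$ with $(a_n)_n\ge0$ and $(b_n)_n\ge0$, and assume that there exists $N\in\mathbb N$ such that $(a_{n+N})_n\le(b_{n+N})_n$, where $(a_{n+N})_n:=[a_{n+N,\varepsilon}]_{\mathrm s}$ and similarly for $b$. Then: (i) if the hyperseries $\sum_{n\in\widetilde{\mathbb N}}b_n$ converges, then so does $\sum_{n\in\widetilde{\mathbb N}}a_n$; (ii) if $\sum_{n\in\widetilde{\mathbb N}}a_n$ diverges to $+\infty$, then so does $\sum_{n\in\widetilde{\mathbb N}}b_n$.
   Context: Fix $I=(0,1]$ and a gauge $\rho=(\rho_\varepsilon)_{\varepsilon\in I}$ with $\rho_\varepsilon\in I$ and $\rho_\varepsilon\to0$ as $\varepsilon\to0$. ''$\forall^0\varepsilon$'' means ''for all sufficiently small $\varepsilon\in I$''. A net $(x_\varepsilon)\in\mathbb C^I$ is $\rho$-moderate ($(x_\varepsilon)\in\mathbb C_\rho$) if $\exists N\in\mathbb N\,\forall^0\varepsilon:|x_\varepsilon|\le\rho_\varepsilon^{-N}$, and $\rho$-negligible if $\forall q\in\mathbb N\,\forall^0\varepsilon:|x_\varepsilon|\le\rho_\varepsilon^q$. $\widetilde{\mathbb C}:=\mathbb C_\rho/\{\text{negligible nets}\}$ with classes $[x_\varepsilon]$; $\widetilde{\mathbb R}\subseteq\widetilde{\mathbb C}$ consists of classes of real moderate nets; $\mathrm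 d\rho:=[\rho_\varepsilon]$, $|[z_\varepsilon]|:=[|z_\varepsilon|]$. On $\widetilde{\mathbb R}$: $[x_\varepsilon]\le[y_\varepsilon]$ iff $x_\varepsilon\le y_\varepsilon+z_\varepsilon$ $\forall^0\varepsilon$ for some negligible $(z_\varepsilon)$; $x<y$ iff $\exists m\,\forall^0\varepsilon:y_\varepsilon-x_\varepsilon>\rho_\varepsilon^m$. Hypernatural numbers: $\widetilde{\mathbb N}:=\{[n_\varepsilon]\in\widetilde{\mathbb R}:n_\varepsilon\in\mathbb N\ \forall\varepsilon\}$; for each $N\in\widetilde{\mathbb N}$ a representative $(\mathrm{ni}(N)_\varepsilon)$ with all $\mathrm{ni}(N)_\varepsilon\in\mathbb N$ is fixed. Hyperlimit: for a map $n\in\widetilde{\mathbb N}\mapsto a_n\in\widetilde{\mathbb C}$, $l=\lim_{n\in\widetilde{\mathbb N}}a_n$ means $\forall q\in\mathbb N\,\exists M\in\widetilde{\mathbb N}\,\forall n\in\widetilde{\mathbb N}:n\ge M\Rightarrow|a_n-l|<\mathrm d\rho^q$. Hyperseries: a net $(a_{n\varepsilon})_{n\in\mathbb N,\varepsilon\in I}$ of complex numbers is moderate over hypersums if for every $N\in\widetilde{\mathbb N}$ the net $(\sum_{n=0}^{\mathrm{ni}(N)_\varepsilon}a_{n\varepsilon})_\varepsilon$ is $\rho$-moderate; two such nets $(a_{n\varepsilon}),(\bar a_{n\varepsilon})$ are equivalent if for all $N,M\in\widetilde{\mathbb N}$ the net $(\sum_{n=\mathrm{ni}(N)_\varepsilon}^{\mathrm{ni}(M)_\varepsilon}(a_{n\varepsilon}-\bar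 a_{n\varepsilon}))_\varepsilon$ is negligible. The quotient is $\widetilde{\mathbb C}_{\mathrm s}$ (resp. $\widetilde{\mathbb R}_{\mathrm s}$ for real nets), with classes $(a_n)_n=[a_{n\varepsilon}]_{\mathrm s}$. For $N,M\in\widetilde{\mathbb N}$, $\sum_{n=N}^Ma_n:=[\sum_{n=\mathrm{ni}(N)_\varepsilon}^{\mathrm{ni}(M)_\varepsilon}a_{n\varepsilon}]$ (empty sums equal $0$). The hyperseries $\sum_{n\in\widetilde{\mathbb N}}a_n$ converges to $s$ if $s=\lim_{N\in\widetilde{\mathbb N}}\sum_{n=0}^Na_n$ exists in $\widetilde{\mathbb C}$; it diverges to $+\infty$ if for every $K\in\widetilde{\mathbb R}$ there is $M\in\widetilde{\mathbb N}$ with $\sum_{n=0}^Na_n>K$ for all $N\in\widetilde{\mathbb N}_{\ge M}$. Order on $\widetilde{\mathbb R}_{\mathrm s}$: $(a_n)_n\le(b_n)_n$ iff $\sum_{n=N}^Ma_n\le\sum_{n=N}^Mb_n$ in $\widetilde{\mathbb R}$ for all $N,M\in\widetilde{\mathbb N}$; $(a_n)_n\ge0$ means $0\le(a_n)_n$. *)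

(* Defs.v *)
From Stdlib Require Import Reals Lra Lia.
Open Scope R_scope.

(* A net over I = (0,1] is a function R -> R (values outside I irrelevant). *)

Definition ev (P : R -> Prop) : Prop :=
  exists e0, 0 < e0 /\ forall e, 0 < e <= 1 -> e <= e0 -> P e.

Definition gauge (rho : R -> R) : Prop :=
  (forall e, 0 < e <= 1 -> 0 < rho e <= 1) /\
  (forall d, 0 < d -> ev (fun e => rho e < d)).

Definition moderate (rho x : R -> R) : Prop :=
  exists N : nat, ev (fun e => Rabs (x e) <= / (rho e ^ N)).

Definition negligible (rho x : R -> R) : Prop :=
  forall q : nat, ev (fun e => Rabs (x e) <= rho e ^ q).

Definition gle (rho x y : R -> R) : Prop :=
  exists z, negligible rho z /\ ev (fun e => x e <= y e + z e).

Definition glt (rho x y : R -> R) : Prop :=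
  exists m : nat, ev (fun e => y e - x e > rho e ^ m).

Definition hypnat (rho : R -> R) (n : R -> nat) : Prop :=
  moderate rho (fun e => INR (n e)).

Definition hnle (rho : R -> R) (n m : R -> nat) : Prop :=
  gle rho (fun e => INR (n e)) (fun e => INR (m e)).

Definition rsum (f : nat -> R) (m n : nat) : R :=
  if (m <=? n)%nat then sum_f_R0 (fun i => f (m + i)%nat) (n - m) else 0.

Definition hsum (a : nat -> R -> R) (N M : R -> nat) : R -> R :=
  fun e => rsum (fun k => a k e) (N e) (M e).

Definition zero_net : R -> nat := fun _ => 0%nat.

(* (a_{n eps}) is moderate over hypersums, i.e. represents an element of R~_s *)
Definition hs_moderate (rho : R -> R) (a : nat -> R -> R) : Prop :=
  forall N, hypnat rho N -> moderate rho (hsum a zero_net N).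

Definition hs_le (rho : R -> R) (a b : nat -> R -> R) : Prop :=
  forall N M, hypnat rho N -> hypnat rho M ->
    gle rho (hsum a N M) (hsum b N M).

Definition hs_zero : nat -> R -> R := fun _ _ => 0.

Definition shift (K : nat) (a : nat -> R -> R) : nat -> R -> R :=
  fun n e => a (n + K)%nat e.

Definition cmod (x y : R) : R := sqrt (x * x + y * y).

(* sum_{n in N~} a_n converges (hyperlimit in C~ of partial sums,
   limit l = [lr_eps + i li_eps]) *)
Definition hs_converges (rho : R -> R) (a : nat -> R -> R) : Prop :=
  exists lr li : R -> R, moderate rho lr /\ moderate rho li /\
    forall q : nat, exists M, hypnat rho M /\
      forall N, hypnat rho N -> hnle rho M N ->
        glt rho (fun e => cmod (hsum a zero_net N e - lr e) (- li e))
                (fun e => rho e ^ q).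

Definition hs_diverges (rho : R -> R) (a : nat -> R -> R) : Prop :=
  forall K : R -> R, moderate rho K ->
    exists M, hypnat rho M /\
      forall N, hypnat rho N -> hnle rho M N ->
        glt rho K (hsum a zero_net N).

(* Main.v *)
Require Import Defs.
From Stdlib Require Import Reals Lra Lia ClassicalEpsilon Classical.
Open Scope R_scope.

Lemma ev_and (P Q : R -> Prop) : ev P -> ev Q -> ev (fun e => P e /\ Q e).
Proof.
  intros [e1 [H1 P1]] [e2 [H2 Q1]]. exists (Rmin e1 e2). split.
  - apply Rmin_pos; lra.
  - intros e He He'. split; [apply P1|apply Q1]; auto.
    + eapply Rle_trans; [exact He'| apply Rmin_l].
    + eapply Rle_trans; [exact He'| apply Rmin_r].
Qed.

Lemma ev_mono (P Q : R -> Prop) : ev P -> (forall e, 0 < e <= 1 -> P e -> Q e) -> ev Q.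
Proof. intros [e0 [H0 HP]] HQ. exists e0; split; auto. Qed.

Lemma ev_all (P : R -> Prop) : (forall e, 0 < e <= 1 -> P e) -> ev P.
Proof. intros H. exists 1; split; [lra| auto]. Qed.

Lemma g_half rho : gauge rho -> ev (fun e => 0 < rho e < /2).
Proof. intros [H1 H2].
  apply (ev_mono _ _ (ev_and _ _ (H2 (/2) ltac:(lra)) (ev_all _ H1))).
  intros e _ [A B]. lra. Qed.

Lemma pow_le1 x n : 0 <= x <= 1 -> x ^ n <= 1.
Proof. intros H. induction n; simpl; [lra|]. pose proof (pow_le x n ltac:(lra)). nra. Qed.

Lemma le_inv x r : 0 < r -> x * r <= 1 -> x <= / r.
Proof. intros Hr H. apply Rmult_le_reg_r with r; auto. rewrite Rinv_l; lra. Qed.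

Lemma inv_le x r : 0 < r -> x <= / r -> x * r <= 1.
Proof. intros Hr H. replace 1 with (/ r * r) by (field; lra). apply Rmult_le_compat_r; lra. Qed.

Lemma mod_bound rho x y w : gauge rho -> moderate rho x -> moderate rho y ->
  ev (fun e => Rabs (w e) <= Rabs (x e) + Rabs (y e)) -> moderate rho w.
Proof.
  intros G [N1 H1] [N2 H2] H. exists (N1 + N2 + 1)%nat.
  apply (ev_mono _ _ (ev_and _ _ (ev_and _ _ H1 H2) (ev_and _ _ H (g_half rho G)))).
  intros e _ [[A B] [C D]].
  assert (Hr : 0 < rho e) by lra.
  apply inv_le in A; [|apply pow_lt; lra]. apply inv_le in B; [|apply pow_lt; lra].
  apply le_inv; [apply pow_lt; lra|].
  rewrite !pow_add. simpl.
  pose proof (pow_le1 (rho e) N1 ltac:(lra)). pose proof (pow_le1 (rho e) N2 ltac:(lra)).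
  pose proof (pow_lt (rho e) N1 Hr). pose proof (pow_lt (rho e) N2 Hr).
  pose proof (Rabs_pos (x e)). pose proof (Rabs_pos (y e)). pose proof (Rabs_pos (w e)).
  set (p1 := rho e ^ N1) in *. set (p2 := rho e ^ N2) in *.
  assert (Rabs (w e) * (p1 * p2 * (rho e * 1)) <= (Rabs (x e) + Rabs (y e)) * (p1 * p2 * (rho e * 1))).
  { apply Rmult_le_compat_r; [|lra]. apply Rmult_le_pos; [nra|lra]. }
  assert (Rabs (x e) * (p1 * p2 * (rho e * 1)) <= /2).
  { replace (Rabs (x e) * (p1 * p2 * (rho e * 1))) with ((Rabs (x e) * p1) * (p2 * rho e)) by ring.
    assert (0 <= p2 * rho e <= /2) by nra. nra. }
  assert (Rabs (y e) * (p1 * p2 * (rho e * 1)) <= /2).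
  { replace (Rabs (y e) * (p1 * p2 * (rho e * 1))) with ((Rabs (y e) * p2) * (p1 * rho e)) by ring.
    assert (0 <= p1 * rho e <= /2) by nra. nra. }
  nra.
Qed.

Lemma mod_const rho c : gauge rho -> moderate rho (fun _ => c).
Proof.
  intros G. pose proof G as [G1 G2]. exists 1%nat.
  assert (Hc : 0 < Rabs c + 1) by (pose proof (Rabs_pos c); lra).
  apply (ev_mono _ _ (ev_and _ _ (G2 (/ (Rabs c + 1)) ltac:(apply Rinv_0_lt_compat; lra)) (g_half rho G))).
  intros e _ [A B]. apply le_inv; [simpl; lra|]. simpl.
  assert (rho e * (Rabs c + 1) < 1).
  { assert (E: / (Rabs c + 1) * (Rabs c + 1) = 1) by (field; lra).
    assert (rho e * (Rabs c + 1) < / (Rabs c + 1) * (Rabs c + 1)) by (apply Rmult_lt_compat_r; lra).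
    lra. }
  pose proof (Rabs_pos c). nra.
Qed.

Lemma hypnat_const rho k : gauge rho -> hypnat rho (fun _ => k).
Proof. intros G. exact (mod_const rho (INR k) G). Qed.

Lemma hypnat_bound rho n m k : gauge rho -> hypnat rho n ->
  (forall e, (m e <= n e + k)%nat) -> hypnat rho m.
Proof.
  intros G Hn Hb. apply (mod_bound rho _ _ _ G Hn (mod_const rho (INR k) G)).
  apply ev_all. intros e _. rewrite !Rabs_right; try (apply Rle_ge, pos_INR).
  rewrite <- plus_INR. apply le_INR. auto.
Qed.

Lemma hypnat_max rho x y : gauge rho -> hypnat rho x -> hypnat rho y ->
  hypnat rho (fun e => Nat.max (x e) (y e)).
Proof.
  intros G Hx Hy. apply (mod_bound rho _ _ _ G Hx Hy).
  apply ev_all. intros e _. rewrite !Rabs_right; try (apply Rle_ge, pos_INR).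
  rewrite <- plus_INR. apply le_INR. lia.
Qed.

Lemma hnle_pw rho M N : gauge rho -> hnle rho M N -> ev (fun e => (M e <= N e)%nat).
Proof.
  intros G [z [Hz H]].
  apply (ev_mono _ _ (ev_and _ _ (ev_and _ _ (Hz 1%nat) H) (g_half rho G))).
  intros e _ [[A B] C]. simpl in A. pose proof (Rle_abs (z e)).
  apply Nat.lt_succ_r. apply INR_lt. rewrite S_INR. lra.
Qed.

Lemma hnle_of_pw rho M N : gauge rho -> (forall e, (M e <= N e)%nat) -> hnle rho M N.
Proof.
  intros [G1 _] H. exists (fun _ => 0). split.
  - intros q. apply ev_all. intros e He. rewrite Rabs_R0. apply pow_le. pose proof (G1 e He); lra.
  - apply ev_all. intros e _. rewrite Rplus_0_r. apply le_INR; auto.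
Qed.

Lemma hnle_weaken rho M M' N : (forall e, (M e <= M' e)%nat) -> hnle rho M' N -> hnle rho M N.
Proof.
  intros H [z [Hz H2]]. exists z. split; auto.
  apply (ev_mono _ _ H2). intros e _ A. pose proof (le_INR _ _ (H e)). lra.
Qed.

Lemma hsum0 (a : nat -> R -> R) N e : hsum a zero_net N e = sum_f_R0 (fun i => a i e) (N e).
Proof. unfold hsum, rsum, zero_net. simpl. rewrite Nat.sub_0_r. reflexivity. Qed.

Lemma hsum_zero N M e : hsum hs_zero N M e = 0.
Proof. unfold hsum, rsum, hs_zero. destruct (N e <=? M e)%nat; [|reflexivity]. rewrite sum_cte. ring. Qed.

Lemma rsum_split f P N : (P < N)%nat -> sum_f_R0 f N - sum_f_R0 f P = rsum f (S P) N.
Proof. intros H. unfold rsum. replace (S P <=? N)%nat with true by (symmetry; apply Nat.leb_le; lia).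
  rewrite (tech2 f P N H). ring. Qed.

Lemma rsum_shift f K n m : (K <= n <= m)%nat ->
  rsum (fun k => f (k + K)%nat) (n - K) (m - K) = rsum f n m.
Proof. intros H. unfold rsum.
  replace (n - K <=? m - K)%nat with true by (symmetry; apply Nat.leb_le; lia).
  replace (n <=? m)%nat with true by (symmetry; apply Nat.leb_le; lia).
  replace (m - K - (n - K))%nat with (m - n)%nat by lia. apply sum_eq. intros i _. f_equal. lia. Qed.

Lemma cmod_ge x y : Rabs x <= cmod x y.
Proof. unfold cmod. rewrite <- sqrt_Rsqr_abs. apply sqrt_le_1_alt. unfold Rsqr. nra. Qed.

Lemma cmod_0 x : cmod x (- 0) = Rabs x.
Proof. unfold cmod. rewrite <- sqrt_Rsqr_abs. unfold Rsqr. f_equal. ring. Qed.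

Lemma hsum_shift (a : nat -> R -> R) K N M e : (K <= N e <= M e)%nat ->
  hsum (shift K a) (fun e => N e - K)%nat (fun e => M e - K)%nat e = hsum a N M e.
Proof. intros H. unfold hsum, shift. exact (rsum_shift (fun k => a k e) K _ _ H). Qed.

Lemma hsum_split (a : nat -> R -> R) P N e : (P e < N e)%nat ->
  hsum a zero_net N e - hsum a zero_net P e = hsum a (fun e => S (P e)) N e.
Proof. intros H. rewrite !hsum0. unfold hsum. apply rsum_split; auto. Qed.

Lemma div_part rho a b K0 : gauge rho -> hs_moderate rho a -> hs_le rho hs_zero b ->
  hs_le rho (shift K0 a) (shift K0 b) -> hs_diverges rho a -> hs_diverges rho b.
Proof.
  intros G Hma Hb Hab Ha K HK.
  set (C := hsum a zero_net (fun _ => K0)).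
  assert (HC : moderate rho C) by (apply Hma; apply hypnat_const; auto).
  destruct (Ha (fun e => K e + C e)) as [M [HM HMp]].
  { apply (mod_bound rho K C _ G HK HC). apply ev_all. intros e _. apply Rabs_triang. }
  exists (fun e => Nat.max (M e) (S K0)). split.
  { apply hypnat_max; auto. apply hypnat_const; auto. }
  intros N HN Hle.
  assert (Hle' : hnle rho M N) by (apply (hnle_weaken _ _ _ _ (fun e => Nat.le_max_l _ _) Hle)).
  destruct (HMp N HN Hle') as [m Hm].
  pose proof (hnle_pw _ _ _ G Hle) as Hpw.
  destruct (Hb zero_net (fun _ => K0) (hypnat_const rho 0 G) (hypnat_const rho K0 G)) as [z3 [Hz3 H3]].
  assert (HNK : hypnat rho (fun e => (N e - K0)%nat)).
  { apply (hypnat_bound rho N _ 0 G HN). intros e. lia. }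
  destruct (Hab (fun e => (S K0 - K0)%nat) (fun e => (N e - K0)%nat) (hypnat_const rho _ G)
     HNK) as [z2 [Hz2 H2]].
  exists (S m).
  apply (ev_mono _ _ (ev_and _ _ (ev_and _ _ (ev_and _ _ Hm Hpw) (ev_and _ _ H3 H2))
     (ev_and _ _ (ev_and _ _ (Hz2 (S (S m))) (Hz3 (S (S m)))) (g_half rho G)))).
  intros e _ [[[A B] [C3 C2]] [[D2 D3] R]].
  simpl in B.
  rewrite hsum_zero in C3.
  rewrite (hsum_shift a K0 (fun _ => S K0) N e) in C2 by lia.
  rewrite (hsum_shift b K0 (fun _ => S K0) N e) in C2 by lia.
  rewrite <- (hsum_split a (fun _ => K0) N e) in C2 by lia.
  rewrite <- (hsum_split b (fun _ => K0) N e) in C2 by lia.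
  unfold C in A.
  pose proof (Rle_abs (z2 e)). pose proof (Rle_abs (z3 e)).
  pose proof (pow_lt (rho e) m ltac:(lra)).
  simpl in D2, D3 |- *.
  set (pm := rho e ^ m) in *.
  assert (X1 : rho e * pm < /2 * pm) by (apply Rmult_lt_compat_r; lra).
  assert (X2 : rho e * (rho e * pm) < /2 * (rho e * pm)) by (apply Rmult_lt_compat_r; nra).
  cbv beta in *. unfold C in *. 
  generalize dependent (hsum a zero_net (fun _ => K0) e). intros.
  set (v := rho e * (rho e * pm)) in *. set (u := rho e * pm) in *. lra.
Qed.

Fixpoint tseq (E : nat -> R) (q : nat) : R :=
  match q with
  | O => Rmin (E O) 1
  | S q' => Rmin (tseq E q') (Rmin (E (S q')) (/ (INR q' + 2)))
  end.

Lemma tpos E q : (forall q, 0 < E q) -> 0 < tseq E q.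
Proof. intros H. induction q; simpl.
  - apply Rmin_pos; [apply H| lra].
  - apply Rmin_pos; auto. apply Rmin_pos; [apply H|]. apply Rinv_0_lt_compat.
    pose proof (pos_INR q); lra.
Qed.

Lemma tle1 E q : tseq E q <= 1.
Proof. induction q; simpl.
  - apply Rmin_r.
  - eapply Rle_trans; [apply Rmin_l| auto].
Qed.

Lemma tleE E q : tseq E q <= E q.
Proof. destruct q; simpl.
  - apply Rmin_l.
  - eapply Rle_trans; [apply Rmin_r| apply Rmin_l].
Qed.

Lemma tanti E p q : (p <= q)%nat -> tseq E q <= tseq E p.
Proof. induction 1; [lra|]. simpl. eapply Rle_trans; [apply Rmin_l| auto]. Qed.

Lemma tsmall E e : 0 < e -> exists q, tseq E q < e.
Proof.
  intros He. destruct (INR_archimed e 1 He) as [n Hn].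
  exists (S n). simpl. eapply Rle_lt_trans; [apply Rmin_r|].
  eapply Rle_lt_trans; [apply Rmin_r|].
  pose proof (pos_INR n).
  apply Rmult_lt_reg_r with (INR n + 2); [lra|]. rewrite Rinv_l; [|lra]. nra.
Qed.

Lemma tband E e : 0 < e -> e <= tseq E 0 -> exists q, e <= tseq E q /\ tseq E (S q) < e.
Proof.
  intros He H0. apply NNPP. intros Hn.
  assert (Hall : forall q, e <= tseq E q).
  { induction q; auto. apply Rnot_lt_le. intros Hl. apply Hn. exists q. split; auto. }
  destruct (tsmall E e He) as [q Hq]. specialize (Hall q). lra.
Qed.

Lemma ev_forall_le (P : nat -> R -> Prop) q :
  (forall p, (p <= q)%nat -> ev (P p)) -> ev (fun e => forall p, (p <= q)%nat -> P p e).
Proof.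
  induction q; intros H.
  - apply (ev_mono _ _ (H 0%nat (le_n 0))). intros e _ A p Hp. replace p with 0%nat by lia. auto.
  - apply (ev_mono _ _ (ev_and _ _ (IHq (fun p Hp => H p ltac:(lia))) (H (S q) (le_n _)))).
    intros e _ [A B] p Hp. destruct (Nat.eq_dec p (S q)) as [->|Hne]; auto. apply A. lia.
Qed.

Lemma complete rho (A : (R -> nat) -> R -> R) (P : nat -> R -> nat) :
  gauge rho ->
  (forall p, hypnat rho (P p)) ->
  (forall p q e, (p <= q)%nat -> (P p e <= P q e)%nat) ->
  moderate rho (A (P 0%nat)) ->
  (forall p N, hypnat rho N -> hnle rho (P p) N ->
     ev (fun e => Rabs (A N e - A (P p) e) <= rho e ^ p)) ->
  exists l, moderate rho l /\ forall p N, hypnat rho N -> hnle rho (P p) N ->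
     ev (fun e => Rabs (A N e - l e) <= 2 * rho e ^ p).
Proof.
  intros G HP Hmono HA0 Hc.
  assert (D : forall q, ev (fun e => forall p, (p <= q)%nat -> Rabs (A (P q) e - A (P p) e) <= rho e ^ p)).
  { intros q. apply ev_forall_le. intros p Hp. apply Hc; auto.
    apply hnle_of_pw; auto. }
  set (E := fun q => proj1_sig (constructive_indefinite_description _ (D q))).
  assert (HE : forall q, 0 < E q /\ forall e, 0 < e <= 1 -> e <= E q ->
      forall p, (p <= q)%nat -> Rabs (A (P q) e - A (P p) e) <= rho e ^ p).
  { intros q. exact (proj2_sig (constructive_indefinite_description _ (D q))). }
  assert (Epos : forall q, 0 < E q) by (intros q; apply HE).
  set (t := tseq E).
  set (Q := fun e => epsilon (inhabits 0%nat) (fun q => e <= t q /\ t (S q) < e)).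
  assert (HQ : forall e, 0 < e -> e <= t 0%nat -> e <= t (Q e) /\ t (S (Q e)) < e).
  { intros e He H0. unfold Q. apply epsilon_spec. apply tband; auto. }
  set (l := fun e => A (P (Q e)) e).
  assert (Key : forall p, ev (fun e => Rabs (A (P p) e - l e) <= rho e ^ p)).
  { intros p. exists (t p). split; [apply tpos; auto|].
    intros e He Hep.
    assert (Ht0 : e <= t 0%nat) by (eapply Rle_trans; [exact Hep| apply tanti; lia]).
    destruct (HQ e ltac:(lra) Ht0) as [Q1 Q2].
    assert (Hpq : (p <= Q e)%nat).
    { destruct (Compare_dec.le_lt_dec p (Q e)) as [h|h]; auto.
      exfalso. assert (t p <= t (S (Q e))) by (apply tanti; lia). lra. }
    rewrite Rabs_minus_sym. apply (proj2 (HE (Q e))); auto.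
    eapply Rle_trans; [exact Q1| apply tleE]. }
  exists l. split.
  - apply (mod_bound rho (A (P 0%nat)) (fun _ => 1) l G HA0 (mod_const rho 1 G)).
    apply (ev_mono _ _ (Key 0%nat)). intros e _ K.
    rewrite Rabs_R1. simpl in K.
    replace (l e) with (A (P 0%nat) e - (A (P 0%nat) e - l e)) by ring.
    eapply Rle_trans; [apply Rabs_triang|]. rewrite Rabs_Ropp. lra.
  - intros p N HN Hle.
    apply (ev_mono _ _ (ev_and _ _ (Hc p N HN Hle) (Key p))). intros e _ [X Y].
    replace (A N e - l e) with ((A N e - A (P p) e) + (A (P p) e - l e)) by ring.
    eapply Rle_trans; [apply Rabs_triang|]. lra.
Qed.

Fixpoint Pseq (K0 : nat) (Mb : nat -> R -> nat) (p : nat) : R -> nat :=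
  match p with
  | O => fun e => Nat.max K0 (Mb 2%nat e)
  | S p' => fun e => Nat.max (Pseq K0 Mb p' e) (Mb (p' + 3)%nat e)
  end.

Lemma Pseq_K0 K0 Mb p e : (K0 <= Pseq K0 Mb p e)%nat.
Proof. induction p; simpl; lia. Qed.

Lemma Pseq_Mb K0 Mb p e : (Mb (p + 2)%nat e <= Pseq K0 Mb p e)%nat.
Proof. destruct p; simpl. - lia. - replace (S (p + 2)) with (p + 3)%nat by lia. lia. Qed.

Lemma Pseq_mono K0 Mb p q e : (p <= q)%nat -> (Pseq K0 Mb p e <= Pseq K0 Mb q e)%nat.
Proof. induction 1; auto. simpl. lia. Qed.

Lemma Pseq_hyp rho K0 Mb : gauge rho -> (forall q, hypnat rho (Mb q)) -> forall p, hypnat rho (Pseq K0 Mb p).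
Proof. intros G H p. induction p; simpl.
  - apply hypnat_max; auto. apply hypnat_const; auto.
  - apply hypnat_max; auto.
Qed.

Lemma conv_part rho a b K0 : gauge rho -> hs_moderate rho a -> hs_le rho hs_zero a ->
  hs_le rho (shift K0 a) (shift K0 b) -> hs_converges rho b -> hs_converges rho a.
Proof.
  intros G Hma Ha Hab [lr [li [Hlr [Hli Hq]]]].
  set (Mb := fun q => proj1_sig (constructive_indefinite_description _ (Hq q))).
  assert (HMb : forall q, hypnat rho (Mb q) /\ forall N, hypnat rho N -> hnle rho (Mb q) N ->
      glt rho (fun e => cmod (hsum b zero_net N e - lr e) (- li e)) (fun e => rho e ^ q)).
  { intros q. exact (proj2_sig (constructive_indefinite_description _ (Hq q))). }
  assert (bclose : forall q N, hypnat rho N -> hnle rho (Mb q) N ->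
      ev (fun e => Rabs (hsum b zero_net N e - lr e) < rho e ^ q)).
  { intros q N HN Hle. destruct (proj2 (HMb q) N HN Hle) as [m Hm].
    apply (ev_mono _ _ (ev_and _ _ Hm (g_half rho G))). intros e _ [X Y].
    pose proof (pow_lt (rho e) m ltac:(lra)).
    pose proof (cmod_ge (hsum b zero_net N e - lr e) (- li e)). lra. }
  set (P := Pseq K0 Mb).
  assert (HP : forall p, hypnat rho (P p)) by (apply Pseq_hyp; auto; intros q; apply HMb).
  assert (Cauchy : forall p N, hypnat rho N -> hnle rho (P p) N ->
     ev (fun e => Rabs (hsum a zero_net N e - hsum a zero_net (P p) e) <= rho e ^ p)).
  { intros p N HN Hle.
    pose proof (hnle_pw _ _ _ G Hle) as Hpw.
    assert (B1 := bclose (p + 2)%nat N HN (hnle_weaken _ _ _ _ (Pseq_Mb K0 Mb p) Hle)).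
    assert (B2 := bclose (p + 2)%nat (P p) (HP p) (hnle_of_pw _ _ _ G (Pseq_Mb K0 Mb p))).
    assert (HS : hypnat rho (fun e => S (P p e))).
    { apply (hypnat_bound rho (P p) _ 1 G (HP p)). intros e; lia. }
    assert (HS' : hypnat rho (fun e => (S (P p e) - K0)%nat)).
    { apply (hypnat_bound rho (P p) _ 1 G (HP p)). intros e; lia. }
    assert (HN' : hypnat rho (fun e => (N e - K0)%nat)).
    { apply (hypnat_bound rho N _ 0 G HN). intros e; lia. }
    destruct (Ha _ _ HS HN) as [z1 [Hz1 H1]].
    destruct (Hab _ _ HS' HN') as [z2 [Hz2 H2]].
    apply (ev_mono _ _ (ev_and _ _ (ev_and _ _ (ev_and _ _ Hpw B1) (ev_and _ _ B2 H1))
       (ev_and _ _ (ev_and _ _ H2 (Hz1 (p + 2)%nat)) (ev_and _ _ (Hz2 (p + 2)%nat) (g_half rho G))))).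
    intros e _ [[[W X1] [X2 Y1]] [[Y2 Z1] [Z2 R]]].
    assert (Hrp : 0 < rho e ^ p) by (apply pow_lt; lra).
    destruct (Nat.eq_dec (P p e) (N e)) as [Heq|Hne].
    { rewrite !hsum0, Heq. replace (_ - _) with 0 by ring. rewrite Rabs_R0. lra. }
    assert (Hlt : (P p e < N e)%nat) by lia.
    rewrite hsum_zero in Y1.
    rewrite (hsum_shift a K0 (fun e => S (P p e)) N e) in Y2 by (pose proof (Pseq_K0 K0 Mb p e); unfold P in *; lia).
    rewrite (hsum_shift b K0 (fun e => S (P p e)) N e) in Y2 by (pose proof (Pseq_K0 K0 Mb p e); unfold P in *; lia).
    rewrite (hsum_split a (P p) N e Hlt).
    rewrite <- (hsum_split b (P p) N e Hlt) in Y2.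
    rewrite pow_add in X1, X2, Z1, Z2. simpl in X1, X2, Z1, Z2.
    set (rp := rho e ^ p) in *.
    set (r2 := rp * (rho e * (rho e * 1))) in *.
    assert (r2 <= /4 * rp).
    { unfold r2. assert (rho e * (rho e * 1) <= /4) by nra. nra. }
    apply Rabs_def2 in X1. apply Rabs_def2 in X2.
    pose proof (Rle_abs (z1 e)). pose proof (Rle_abs (- z1 e)). pose proof (Rle_abs (z2 e)).
    rewrite Rabs_Ropp in *.
    apply Rabs_le. lra. }
  destruct (complete rho (fun N => hsum a zero_net N) P G HP
     (fun p q e H => Pseq_mono K0 Mb p q e H) (Hma _ (HP 0%nat)) Cauchy) as [l [Hl Hlim]].
  exists l, (fun _ => 0). split; [auto|]. split; [apply mod_const; auto|].
  intros q. exists (P (q + 2)%nat). split; [auto|].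
  intros N HN Hle. exists (S q).
  apply (ev_mono _ _ (ev_and _ _ (Hlim (q + 2)%nat N HN Hle) (g_half rho G))).
  intros e _ [X R]. cbv beta. rewrite cmod_0.
  rewrite pow_add in X. simpl in X |- *.
  assert (Hrp : 0 < rho e ^ q) by (apply pow_lt; lra).
  set (rp := rho e ^ q) in *.
  assert (rho e * rp < /2 * rp) by (apply Rmult_lt_compat_r; lra).
  assert (rp * (rho e * (rho e * 1)) <= /4 * rp) by (assert (rho e * (rho e * 1) <= /4) by nra; nra).
  lra.
Qed.

Theorem theorem2p16 (rho : R -> R) (a b : nat -> R -> R) :
  gauge rho ->
  hs_moderate rho a -> hs_moderate rho b ->
  hs_le rho hs_zero a -> hs_le rho hs_zero b ->
  (exists K : nat, hs_le rho (shift K a) (shift K b)) ->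
  (hs_converges rho b -> hs_converges rho a) /\
  (hs_diverges rho a -> hs_diverges rho b).
Proof.
  intros G Hma Hmb Ha Hb [K0 HK]. split.
  - apply (conv_part rho a b K0 G Hma Ha HK).
  - apply (div_part rho a b K0 G Hma Hb HK).
Qed.
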